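(* Let $f=\frac1n\sum_{i=1}^n f_i$ where each $f_i:\mathbb{R}^d\to\mathbb{R}$ is $L$-smooth, and assume moreover that either each $f_i$ is $\mu$-strongly convex for some $\mu>0$, or $\inf_x f(x)>-\infty$. Let the stepsize satisfy $\gamma\le\frac1{3L}$. Then the iterates of No Full Grad SARAH (described in the context) satisfy, for every epoch $s\ge1$, $$\Big\|\nabla f(x_s^0)-\frac1{n+1}\sum_{t=0}^{n}v_s^t\Big\|^2\le 9\gamma^2L^2\|v_s\|^2+36\gamma^2L^2n^2\|v_{s-1}\|^2.$$
   Context: No Full Grad SARAH: input $x_0^0\in\mathbb{R}^d$, $v_0=0$, stepsize $\gamma>0$. For epochs $s=0,1,\dots$: choose a permutation $\pi_s^1,\dots,\pi_s^n$ of $\{1,\dots,n\}$ (by any shuffling rule); set $\tilde v_s^1=0$, $v_s^0=v_s$, $x_s^1=x_s^0-\gamma v_s^0$; for $t=1,\dots,n$ set $\tilde v_s^{t+1}=\frac{t-1}{t}\tilde v_s^t+\frac1t\nabla f_{\pi_s^t}(x_s^t)$, $v_s^t=\frac1n\big(\nabla f_{\pi_s^t}(x_s^t)-\nabla f_{\pi_s^t}(x_s^{t-1})\big)+v_s^{t-1}$, $x_s^{t+1}=x_s^t-\gamma v_s^t$; then $x_{s+1}^0=x_s^{n+1}$, $v_{s+1}=\tilde v_s^{n+1}$. *)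

(* Defs.v *)
From HB Require Import structures.
From mathcomp Require Import all_boot all_order all_algebra all_fingroup.
From mathcomp Require Import all_classical all_reals all_analysis.
Set Implicit Arguments. Unset Strict Implicit. Unset Printing Implicit Defensive.
Import Order.TTheory GRing.Theory Num.Theory.
Import numFieldNormedType.Exports.
Local Open Scope ring_scope.

Section NFGS.
Variables (R : realType) (d : nat).
Notation V := 'rV[R]_d.

Definition dotv (u v : V) : R := \sum_(i < d) u 0 i * v 0 i.
Definition enorm (u : V) : R := Num.sqrt (dotv u u).

Definition has_gradient (f : V -> R) (g : V -> V) : Prop :=
  forall x, differentiable f x /\ forall h, is_derive x h f (dotv (g x) h).

Definition L_smooth (L : R) (f : V -> R) (g : V -> V) : Prop :=
  has_gradient f g /\ forall x y, enorm (g x - g y) <= L * enorm (x - y).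

Definition strongly_convex (mu : R) (f : V -> R) : Prop :=
  forall (x y : V) (th : R), 0 <= th <= 1 ->
    f (th *: x + (1 - th) *: y)
      <= th * f x + (1 - th) * f y - mu / 2 * th * (1 - th) * enorm (x - y) ^+ 2.

Definition favg (n : nat) (f : 'I_n -> V -> R) (x : V) : R :=
  n%:R^-1 * \sum_(i < n) f i x.
Definition gavg (n : nat) (g : 'I_n -> V -> V) (x : V) : V :=
  n%:R^-1 *: \sum_(i < n) g i x.

(* inner state after processing step t (0 <= t <= n):
   xprev = x_s^t, xcur = x_s^{t+1}, vcur = v_s^t, vtil = tilde v_s^{t+1}, cnt = t *)
Record nfg_state := NFGState { xprev : V; xcur : V; vcur : V; vtil : V; cnt : nat }.

Definition nfg_init (gamma : R) (x0 v : V) : nfg_state :=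
  NFGState x0 (x0 - gamma *: v) v 0 0.

(* process step t = cnt+1 with sampled index j = pi_s^t *)
Definition nfg_step (n : nat) (g : 'I_n -> V -> V) (gamma : R)
    (st : nfg_state) (j : 'I_n) : nfg_state :=
  let t := (cnt st).+1 in
  let v' := n%:R^-1 *: (g j (xcur st) - g j (xprev st)) + vcur st in
  NFGState (xcur st) (xcur st - gamma *: v') v'
    ((t%:R - 1) / t%:R *: vtil st + t%:R^-1 *: g j (xcur st)) t.

Definition nfg_epoch (n : nat) (g : 'I_n -> V -> V) (gamma : R)
    (p : 'S_n) (x0 v : V) : seq nfg_state :=
  let st0 := nfg_init gamma x0 v in
  st0 :: scanl (nfg_step g gamma) st0 [seq p i | i <- enum 'I_n].

(* (x_s^0, v_s) for every epoch s; x_0^0 given, v_0 = 0 *)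
Fixpoint nfg_outer (n : nat) (g : 'I_n -> V -> V) (gamma : R)
    (pi : nat -> 'S_n) (x00 : V) (s : nat) : V * V :=
  match s with
  | 0 => (x00, 0)
  | s'.+1 =>
      let: (x0, v) := nfg_outer g gamma pi x00 s' in
      let st := last (nfg_init gamma x0 v) (nfg_epoch g gamma (pi s') x0 v) in
      (xcur st, vtil st)
  end.

Definition nfg_x (n : nat) (g : 'I_n -> V -> V) gamma pi x00 s : V :=
  (nfg_outer g gamma pi x00 s).1.
Definition nfg_v (n : nat) (g : 'I_n -> V -> V) gamma pi x00 s : V :=
  (nfg_outer g gamma pi x00 s).2.
Definition nfg_vt (n : nat) (g : 'I_n -> V -> V) gamma pi x00 s (t : nat) : V :=
  vcur (nth (nfg_init gamma 0 0)
    (nfg_epoch g gamma (pi s) (nfg_x g gamma pi x00 s) (nfg_v g gamma pi x00 s)) t).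

End NFGS.

(* Main.v *)
Require Import Defs.
From HB Require Import structures.
From mathcomp Require Import all_boot all_order all_algebra all_fingroup.
From mathcomp Require Import all_classical all_reals all_analysis.
From mathcomp Require Import ring lra.
Import Order.TTheory GRing.Theory Num.Theory.
Local Open Scope ring_scope.


Section Norm.
Variables (R : realType) (d : nat).
Notation V := 'rV[R]_d.
Notation N := (@enorm R d).
Notation D := (@dotv R d).

Lemma dotv_ge0 (u : V) : 0 <= D u u.
Proof. by apply: sumr_ge0 => i _; rewrite -expr2 sqr_ge0. Qed.

Lemma dotvC (u v : V) : D u v = D v u.
Proof. by apply: eq_bigr => i _; rewrite mulrC. Qed.

Lemma dotvDl (u v w : V) : D (u + v) w = D u w + D v w.
Proof. by rewrite /dotv -big_split; apply: eq_bigr => i _; rewrite !mxE mulrDl. Qed.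

Lemma dotvZl c (u w : V) : D (c *: u) w = c * D u w.
Proof. by rewrite /dotv mulr_sumr; apply: eq_bigr => i _; rewrite !mxE mulrA. Qed.

Lemma dotvDr (u v w : V) : D w (u + v) = D w u + D w v.
Proof. by rewrite dotvC dotvDl !(dotvC w). Qed.

Lemma dotvZr c (u w : V) : D w (c *: u) = c * D w u.
Proof. by rewrite dotvC dotvZl dotvC. Qed.

Lemma enorm_ge0 (u : V) : 0 <= N u.
Proof. exact: sqrtr_ge0. Qed.

Lemma enorm_sq (u : V) : N u ^+ 2 = D u u.
Proof. by rewrite sqr_sqrtr // dotv_ge0. Qed.

Lemma dotv0 (u v : V) : D v v = 0 -> D u v = 0.
Proof.
move=> h.
have hv : forall i, v 0 i * v 0 i = 0.
  move=> i; have := @psumr_eq0P _ _ xpredT (fun i => v 0 i * v 0 i).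
  by move=> /(_ _ h i isT) => //; apply=> j _; rewrite -expr2 sqr_ge0.
by apply: big1 => i _; move/eqP: (hv i); rewrite mulf_eq0 orbb => /eqP ->; rewrite mulr0.
Qed.

Lemma CS (u v : V) : D u v <= N u * N v.
Proof.
have hp : 0 <= N u * N v by rewrite mulr_ge0 ?enorm_ge0.
case: (lerP (D u v) 0) => hc; first exact: le_trans hc hp.
rewrite -(ler_pXn2r (n:=2)) // ?nnegrE ?(ltW hc) //.
rewrite exprMn !enorm_sq.
set a := D u u; set b := D v v; set c := D u v.
have hb := dotv_ge0 v.
have hw := dotv_ge0 (b *: u + (- c) *: v).
rewrite !(dotvDl, dotvDr, dotvZl, dotvZr) in hw.
rewrite -/a -/b -/c (dotvC v u) -/c in hw.
case: (ltrP 0 b) => hb0.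
  have : 0 <= b * (a * b - c ^+ 2).
    suff -> : b * (a * b - c ^+ 2) = b * (b * a + - c * c) + (b * (- c * c) + - c * (- c * b)) by [].
    ring.
  by rewrite pmulr_rge0 // subr_ge0.
have b0 : b = 0 by apply/eqP; rewrite eq_le hb0 hb.
by move: hc; rewrite /c dotv0 // ltxx.
Qed.

Lemma enormD (u v : V) : N (u + v) <= N u + N v.
Proof.
rewrite -(ler_pXn2r (n:=2)) // ?nnegrE ?addr_ge0 ?enorm_ge0 //.
rewrite enorm_sq sqrrD !enorm_sq !(dotvDl, dotvDr) (dotvC v u).
have := CS u v; lra.
Qed.

Lemma enormZ c (u : V) : N (c *: u) = `|c| * N u.
Proof.
by rewrite /enorm dotvZl dotvZr mulrA -expr2 sqrtrM ?sqr_ge0 // sqrtr_sqr.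
Qed.

Lemma enormN (u : V) : N (- u) = N u.
Proof. by rewrite -scaleN1r enormZ normrN normr1 mul1r. Qed.

Lemma enormB (u v : V) : N (u - v) <= N u + N v.
Proof. by rewrite -(enormN v); apply: enormD. Qed.

Lemma enorm0 : N 0 = 0.
Proof. by rewrite -(scale0r 0) enormZ normr0 mul0r. Qed.

Lemma enorm_sum (I : Type) (r : seq I) (P : pred I) (F : I -> V) :
  N (\sum_(i <- r | P i) F i) <= \sum_(i <- r | P i) N (F i).
Proof.
apply: (big_ind2 (fun a b => N a <= b)); first by rewrite enorm0.
  by move=> a b c e h1 h2; apply: le_trans (enormD _ _) _; apply: lerD.
by [].
Qed.
End Norm.


Lemma nth_scan_step (A B : Type) (f : A -> B -> A) (z x0 : A) (y0 : B) (s : seq B) t :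
  (t < size s)%N -> nth x0 (z :: scanl f z s) t.+1 = f (nth x0 (z :: scanl f z s) t) (nth y0 s t).
Proof.
elim: s z t => [|b s IH] z [|t] //= ht.
exact: (IH (f z b) t ht).
Qed.

Section Epoch.
Variables (R : realType) (d n : nat) (g : 'I_n -> 'rV[R]_d -> 'rV[R]_d) (L gamma : R).
Variables (p : 'S_n) (x0 v : 'rV[R]_d).
Hypothesis hn : (0 < n)%N.
Hypothesis hL0 : 0 <= L.
Hypothesis hLip : forall i x y, enorm (g i x - g i y) <= L * enorm (x - y).
Hypothesis hg : 0 < gamma.
Hypothesis hgL : 3 * gamma * L <= 1.
Notation N := (@enorm R d).

Definition i0 : 'I_n := Ordinal hn.
Definition sq := [seq p i | i <- enum 'I_n].
Definition ep := nfg_epoch g gamma p x0 v.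
Definition ST t := nth (nfg_init gamma 0 0) ep t.
Definition j t := nth i0 sq t.
Definition vv t := vcur (ST t).
Definition y t := xcur (ST t).
Arguments ST : simpl never.
Arguments j : simpl never.
Arguments vv : simpl never.
Arguments y : simpl never.

Lemma size_sq : size sq = n.
Proof. by rewrite size_map size_enum_ord. Qed.

Lemma size_ep : size ep = n.+1.
Proof. by rewrite /ep /nfg_epoch /= size_scanl size_sq. Qed.

Lemma step_cnt st k : cnt (nfg_step g gamma st k) = (cnt st).+1.
Proof. by []. Qed.
Lemma step_xprev st k : xprev (nfg_step g gamma st k) = xcur st.
Proof. by []. Qed.
Lemma step_vcur st k : vcur (nfg_step g gamma st k) =
  n%:R^-1 *: (g k (xcur st) - g k (xprev st)) + vcur st.
Proof. by []. Qed.
Lemma step_xcur st k : xcur (nfg_step g gamma st k) = xcur st - gamma *: vcur (nfg_step g gamma st k).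
Proof. by []. Qed.
Lemma step_vtil st k : vtil (nfg_step g gamma st k) =
  (((cnt st).+1)%:R - 1) / ((cnt st).+1)%:R *: vtil st + ((cnt st).+1)%:R^-1 *: g k (xcur st).
Proof. by []. Qed.

Lemma STS t : (t < n)%N -> ST t.+1 = nfg_step g gamma (ST t) (j t).
Proof. by move=> ht; rewrite /ST /ep /nfg_epoch (@nth_scan_step _ _ _ _ _ i0) // size_sq. Qed.

Lemma ST0 : ST 0 = nfg_init gamma x0 v.
Proof. by []. Qed.

Lemma cntE t : (t <= n)%N -> cnt (ST t) = t.
Proof.
elim: t => [|t IH] ht; first by [].
by rewrite STS // step_cnt IH // ltnW.
Qed.

Lemma diffE t : (t <= n)%N -> xprev (ST t) = y t + gamma *: vv t.
Proof.
rewrite /y /vv; case: t => [|t] ht; first by rewrite ST0 /= subrK.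
by rewrite STS // step_xprev step_xcur subrK.
Qed.

Lemma vrec t : (t < n)%N ->
  vv t.+1 = n%:R^-1 *: (g (j t) (y t) - g (j t) (y t + gamma *: vv t)) + vv t.
Proof. by move=> ht; rewrite /vv STS // step_vcur diffE // ltnW. Qed.

Lemma yrec t : (t < n)%N -> y t.+1 = y t - gamma *: vv t.+1.
Proof. by move=> ht; rewrite /y /vv STS // step_xcur. Qed.

Lemma vtilE t : (t <= n)%N -> vtil (ST t) = t%:R^-1 *: \sum_(k < t) g (j k) (y k).
Proof.
elim: t => [|t IH] ht.
  by rewrite big_ord0 scaler0 ST0.
have ht' : (t <= n)%N := ltnW ht.
rewrite STS // step_vtil (IH ht') (cntE t ht') big_ord_recr scalerDr scalerA.
congr (_ + _).
case: t {IH ht ht'} => [|t]; first by rewrite big_ord0 !scaler0.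
congr (_ *: _); rewrite -natr1 addrK; field.
have := ler0n R t; move=> h0.
by apply/andP; split; apply: lt0r_neq0; lra.
Qed.


Lemma stepb t : (t < n)%N -> N (vv t.+1 - vv t) <= gamma * L * n%:R^-1 * N (vv t).
Proof.
have hn0 : (0 : R) <= n%:R^-1 by rewrite invr_ge0 ler0n.
move=> ht; rewrite vrec // addrK enormZ (ger0_norm hn0).
have := hLip (j t) (y t) (y t + gamma *: vv t).
rewrite opprD addrA subrr add0r enormN enormZ (ger0_norm (ltW hg)) => h.
rewrite [gamma * L * _]mulrC -!mulrA; apply: ler_wpM2l; first by rewrite invr_ge0 ler0n.
by apply: le_trans h _; rewrite mulrCA.
Qed.

Lemma arith (a m c q N0 Dt Nt D' : R) : 0 <= a -> a * 3 <= 1 -> 0 <= m -> 0 <= q -> q <= 1 ->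
  0 <= N0 -> c = a * m -> D' <= c * Nt + Dt -> Nt <= Dt + N0 -> Dt <= 2 * a * q * N0 -> 0 <= Dt ->
  D' <= 2 * a * (q + m) * N0.
Proof.
move=> ha ha3 hm hq hq1 hN0 -> h1 h2 h3 hD.
have h4 : 2 * a * q * N0 <= N0.
  have : 2 * a * q <= 1 by nra.
  move=> hh; have := ler_wpM2r hN0 hh; rewrite mul1r; exact.
have hc : 0 <= a * m by rewrite mulr_ge0.
have h5 : a * m * Nt <= a * m * (2 * N0) by apply: ler_wpM2l => //; lra.
have -> : 2 * a * (q + m) * N0 = 2 * a * q * N0 + a * m * (2 * N0) by ring.
lra.
Qed.

Lemma qS t : ((t.+1)%:R / n%:R : R) = t%:R / n%:R + n%:R^-1.
Proof. by rewrite -natr1 mulrDl mul1r. Qed.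

Lemma q_ge0 t : (0 : R) <= t%:R / n%:R.
Proof. by rewrite mulr_ge0 ?invr_ge0 ?ler0n. Qed.

Lemma q_le1 t : (t <= n)%N -> (t%:R / n%:R : R) <= 1.
Proof.
move=> ht; rewrite ler_pdivrMr ?ltr0n // mul1r ler_nat //.
Qed.

Lemma bnd t : (t <= n)%N -> N (vv t - vv 0) <= 2 * (gamma * L) * (t%:R / n%:R) * N (vv 0).
Proof.
elim: t => [|t IH] ht.
  by rewrite subrr enorm0 mul0r mulr0 mul0r.
have ht' : (t <= n)%N := ltnW ht.
rewrite qS.
apply: (@arith _ _ (gamma * L * n%:R^-1) _ _ (N (vv t - vv 0)) (N (vv t))).
- by rewrite mulr_ge0 // ltW.
- by rewrite mulrC mulrA.
- by rewrite invr_ge0 ler0n.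
- exact: q_ge0.
- exact: q_le1.
- exact: enorm_ge0.
- by [].
- have -> : vv t.+1 - vv 0 = (vv t.+1 - vv t) + (vv t - vv 0) by rewrite addrA subrK.
  apply: le_trans (enormD _ _ _ _) _; apply: lerD => //; exact: stepb.
- have -> : vv t = (vv t - vv 0) + vv 0 by rewrite subrK.
  apply: le_trans (enormD _ _ _ _) _; by rewrite subrK.
- exact: IH.
- exact: enorm_ge0.
Qed.

Lemma vbound t : (t <= n)%N -> N (vv t) <= 2 * N (vv 0).
Proof.
move=> ht; have h := bnd t ht.
have hq := q_le1 t ht; have hq0 := q_ge0 t.
have ha : 0 <= gamma * L by rewrite mulr_ge0 // ltW.
have ha3 : gamma * L * 3 <= 1 by rewrite mulrC mulrA.
have h2 : 2 * (gamma * L) * (t%:R / n%:R) <= 1.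
  move: ha ha3; set a := gamma * L; set q := t%:R / n%:R => ha ha3.
  have : a * q <= a * 1 by apply: ler_wpM2l.
  lra.
have hN := enorm_ge0 _ _ (vv 0).
have h3 := ler_wpM2r hN h2; rewrite mul1r in h3.
have -> : vv t = (vv t - vv 0) + vv 0 by rewrite subrK.
apply: le_trans (enormD _ _ _ _) _; lra.
Qed.

Lemma Dbound t : (t <= n)%N -> N (vv t - vv 0) <= 2 * (gamma * L) * N (vv 0).
Proof.
move=> ht; apply: le_trans (bnd t ht) _.
apply: ler_wpM2r; first exact: enorm_ge0.
rewrite -{2}(mulr1 (2 * _)); apply: ler_wpM2l; last exact: q_le1.
by rewrite mulr_ge0 // mulr_ge0 // ltW.
Qed.


Lemma E1 : N ((n.+1)%:R^-1 *: \sum_(t < n.+1) vv t - vv 0) <= 2 * (gamma * L) * N (vv 0).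
Proof.
have hn1 : (n.+1)%:R != 0 :> R by rewrite pnatr_eq0.
have -> : (n.+1)%:R^-1 *: \sum_(t < n.+1) vv t - vv 0 =
          (n.+1)%:R^-1 *: \sum_(t < n.+1) (vv t - vv 0).
  by rewrite sumrB sumr_const card_ord scalerBr -[vv 0 *+ n.+1]scaler_nat scalerA mulVf // scale1r.

rewrite enormZ ger0_norm; last by rewrite invr_ge0 ler0n.
rewrite ler_pdivrMl ?ltr0n //.
apply: le_trans (enorm_sum _ _ _ _ _ _) _.
apply: le_trans (ler_sum _ (fun (t : 'I_n.+1) _ => Dbound t (ltn_ord t : (t <= n)%N))) _.
rewrite sumr_const card_ord -[_ *+ n.+1]mulr_natl; exact: lexx.
Qed.

Lemma ybound i : forall k, (k + i <= n)%N -> N (y (k + i) - y k) <= 2 * gamma * i%:R * N (vv 0).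
Proof.
elim: i => [|i IH] k hk.
  by rewrite addn0 subrr enorm0 mulr0 mul0r.
rewrite addnS yrec; last by rewrite -addnS.
have -> : y (k + i) - gamma *: vv (k + i).+1 - y k = (y (k + i) - y k) + (- (gamma *: vv (k + i).+1)).
  by rewrite addrAC.
apply: le_trans (enormD _ _ _ _) _.
rewrite enormN enormZ (ger0_norm (ltW hg)).
have hk1 : (k + i < n)%N by rewrite -addnS.
have h1 := IH k (ltnW hk1).
have h2 := vbound ((k + i).+1) hk1.
have h3 : gamma * N (vv (k + i).+1) <= gamma * (2 * N (vv 0)) by apply: ler_wpM2l => //; exact: ltW.
rewrite -[i.+1%:R]natr1.
have -> : 2 * gamma * (i%:R + 1) * N (vv 0) = 2 * gamma * i%:R * N (vv 0) + gamma * (2 * N (vv 0)) by ring.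
exact: lerD.
Qed.

Lemma perm_sum (G : 'I_n -> 'rV[R]_d) : \sum_(k < n) G (j k) = \sum_i G i.
Proof.
have := @big_nth _ 0 +%R _ i0 sq xpredT G; rewrite size_sq big_mkord => <-.
rewrite big_map big_enum.
symmetry; rewrite [LHS](reindex_inj (@perm_inj _ p)); apply: eq_bigl => i. by [].
Qed.

Lemma E2 : N (gavg g (y n) - vtil (ST n)) <= 2 * (gamma * L) * n%:R * N (vv 0).
Proof.
have hn0 : (0 : R) <= n%:R^-1 by rewrite invr_ge0 ler0n.
rewrite vtilE // /gavg -(perm_sum (fun i => g i (y n))) -scalerBr -sumrB.
rewrite enormZ (ger0_norm hn0) ler_pdivrMl ?ltr0n //.
apply: le_trans (enorm_sum _ _ _ _ _ _) _.
have hb : forall k : 'I_n, true -> N (g (j k) (y n) - g (j k) (y k)) <= L * (2 * gamma * n%:R * N (vv 0)).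
  move=> k _; apply: le_trans (hLip _ _ _) _; apply: ler_wpM2l => //.
  have hkn : (k <= n)%N := ltnW (ltn_ord k).
  have hk : (k + (n - k) <= n)%N by rewrite (subnKC hkn).
  have := ybound (n - k) k hk; rewrite (subnKC hkn) => h.
  apply: le_trans h _; apply: ler_wpM2r; first exact: enorm_ge0.
  apply: ler_wpM2l; first by rewrite mulr_ge0 // ltW.
  by rewrite ler_nat leq_subr.
apply: le_trans (ler_sum _ hb) _.
rewrite sumr_const card_ord -[_ *+ n]mulr_natl.
have -> : n%:R * (L * (2 * gamma * n%:R * N (vv 0))) = n%:R * (2 * (gamma * L) * n%:R * N (vv 0)) by ring.
exact: lexx.
Qed.

Lemma lastE : last (nfg_init gamma x0 v) ep = ST n.
Proof.
rewrite -nth_last size_ep /= /ST; apply: set_nth_default.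
by rewrite size_ep.
Qed.

Lemma vv0 : vv 0 = v.
Proof. by []. Qed.

End Epoch.


Lemma fin_arith (R : realType) (e P Q : R) : 0 <= e -> 0 <= P -> 0 <= Q -> e <= 2 * P + 2 * Q ->
  e ^+ 2 <= 9 * P ^+ 2 + 36 * Q ^+ 2.
Proof.
move=> he hP hQ h.
have h1 : e * e <= (2 * P + 2 * Q) * (2 * P + 2 * Q) by apply: ler_pM.
have h2 : 0 <= (P - Q) ^+ 2 by apply: sqr_ge0.
rewrite !expr2 in h2 *; nra.
Qed.

Theorem lemma4 (R : realType) (d n : nat) (f : 'I_n -> 'rV[R]_d -> R)
    (g : 'I_n -> 'rV[R]_d -> 'rV[R]_d) (L gamma : R)
    (pi : nat -> 'S_n) (x00 : 'rV[R]_d) :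
  (0 < n)%N -> 0 <= L ->
  (forall i, L_smooth L (f i) (g i)) ->
  ((exists mu : R, 0 < mu /\ forall i, strongly_convex mu (f i)) \/
   (exists m : R, forall x, m <= favg f x)) ->
  0 < gamma -> 3 * gamma * L <= 1 ->
  forall s : nat, (1 <= s)%N ->
    enorm (gavg g (nfg_x g gamma pi x00 s)
           - (n.+1)%:R^-1 *: \sum_(t < n.+1) nfg_vt g gamma pi x00 s t) ^+ 2
    <= 9 * gamma ^+ 2 * L ^+ 2 * enorm (nfg_v g gamma pi x00 s) ^+ 2
       + 36 * gamma ^+ 2 * L ^+ 2 * (n%:R) ^+ 2 * enorm (nfg_v g gamma pi x00 s.-1) ^+ 2.
Proof.
move=> hn hL0 hsm _ hg hgL [|s'] // _.
have hLip : forall i x y, enorm (g i x - g i y) <= L * enorm (x - y).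
  by move=> i x y; case: (hsm i) => _; apply.
rewrite [s'.+1.-1]/=.
set s := s'.+1.
set x0 := nfg_x g gamma pi x00 s'.
set v0 := nfg_v g gamma pi x00 s'.
have hxs : nfg_x g gamma pi x00 s = y _ _ _ g gamma (pi s') x0 v0 n.
  rewrite /s /nfg_x /= /x0 /v0 /nfg_x /nfg_v.
  case: (nfg_outer g gamma pi x00 s') => a b /=.
  by have := lastE _ _ _ g gamma (pi s') a b; rewrite /ep /nfg_epoch /= => ->.
have hvs : nfg_v g gamma pi x00 s = vtil (ST _ _ _ g gamma (pi s') x0 v0 n).
  rewrite /s /nfg_v /= /x0 /v0 /nfg_x /nfg_v.
  case: (nfg_outer g gamma pi x00 s') => a b /=.
  by have := lastE _ _ _ g gamma (pi s') a b; rewrite /ep /nfg_epoch /= => ->.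
have hvt : \sum_(t < n.+1) nfg_vt g gamma pi x00 s t =
  \sum_(t < n.+1) vv _ _ _ g gamma (pi s) (nfg_x g gamma pi x00 s) (nfg_v g gamma pi x00 s) t.
  by [].
rewrite hvt.
have e1 := @E1 _ _ _ g L gamma (pi s) (nfg_x g gamma pi x00 s) (nfg_v g gamma pi x00 s) hn hL0 hLip hg hgL.
have e2 := @E2 _ _ _ g L gamma (pi s') x0 v0 hn hL0 hLip hg hgL.
rewrite -hxs -hvs in e2.
have hv1 : vv _ _ _ g gamma (pi s) (nfg_x g gamma pi x00 s) (nfg_v g gamma pi x00 s) 0 = nfg_v g gamma pi x00 s by [].
have hv2 : vv _ _ _ g gamma (pi s') x0 v0 0 = v0 by [].
rewrite hv1 in e1; rewrite hv2 in e2.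
set X := gavg g _ in e2 *.
set S := (n.+1)%:R^-1 *: _ in e1 *.
set V := nfg_v g gamma pi x00 s in e1 e2 *.
have hE : enorm (X - S) <= 2 * (gamma * L * enorm V) + 2 * (gamma * L * n%:R * enorm v0).
  have -> : X - S = (X - V) - (S - V) by rewrite opprB addrA subrK.
  apply: le_trans (enormB _ _ _ _) _.
  have -> : 2 * (gamma * L * enorm V) + 2 * (gamma * L * n%:R * enorm v0) =
            2 * (gamma * L) * n%:R * enorm v0 + 2 * (gamma * L) * enorm V by ring.
  exact: lerD.
have hga : 0 <= gamma * L by rewrite mulr_ge0 // ltW.
have := @fin_arith _ _ _ _ (enorm_ge0 _ _ _) (mulr_ge0 hga (enorm_ge0 _ _ V))
  (mulr_ge0 (mulr_ge0 hga (ler0n _ n)) (enorm_ge0 _ _ v0)) hE.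
move=> h; apply: le_trans h _.
have -> : 9 * (gamma * L * enorm V) ^+ 2 + 36 * (gamma * L * n%:R * enorm v0) ^+ 2 =
  9 * gamma ^+ 2 * L ^+ 2 * enorm V ^+ 2 + 36 * gamma ^+ 2 * L ^+ 2 * n%:R ^+ 2 * enorm v0 ^+ 2 by ring.
exact: lexx.
Qed.
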